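(* For any Loomis-Whitney query $Q$, $\mathsf{w}(\widehat Q)=\frac32$, where $\widehat Q$ is the multivariate extension of $Q$.
   Context: A Loomis-Whitney query of degree $k\ge3$ has variables $X_1,\dots,X_k$ and $k$ atoms $R_1,\dots,R_k$, where the schema of $R_i$ consists of all variables except $X_i$ (e.g., the triangle query $R(A,B)\wedge S(B,C)\wedge T(A,C)$ for $k=3$). Multivariate extension of $Q=R_1(\mathbf X_1)\wedge\cdots\wedge R_k(\mathbf X_k)$: take fresh variables $Z_1,\dots,Z_k$. For a permutation $\sigma$ of $[k]$, the component $\widehat Q_\sigma$ replaces each atom $R_{\sigma_i}(\mathbf X_{\sigma_i})$ by $\widehat R_{\sigma_i}(Z_1,\dots,Z_i,\mathbf X_{\sigma_i})$; $\widehat Q$ is the union of all components. Fractional hypertree width $\mathsf{w}(P)$ of a query $P$: minimum over tree decompositions of $P$ (trees with bags of variables covering every atom schema, the bags containing any variable forming a connected subtree) of the maximum over bags $B$ of the fractional edge cover number of $P$ restricted to $B$ (each atom schema intersected with $B$). For a union of queries, $\mathsf{w}$ is the maximum over the queries. *)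

(* Defs.v *)
From mathcomp Require Import all_boot all_order all_algebra.
From mathcomp Require Import perm.
From mathcomp Require Import boolp classical_sets reals.
Set Implicit Arguments. Unset Strict Implicit. Unset Printing Implicit Defensive.
Import Order.TTheory GRing.Theory Num.Theory.
Local Open Scope ring_scope.

(* A (conjunctive) query over the variable type V is represented by the list
   of its atom schemas (the relation names play no role for the width). *)

(* Trees: a nonempty connected simple graph with |N| - 1 edges.
   [set p | e p.1 p.2] counts every undirected edge twice. *)
Definition is_tree (N : finType) (e : rel N) : Prop :=
  [/\ (0 < #|N|)%N, symmetric e, irreflexive e,
      (forall x y, connect e x y) &
      #|[set p : N * N | e p.1 p.2]| = (2 * (#|N| - 1))%N].

Definition is_tree_decomposition (V : finType) (A : seq {set V})
    (N : finType) (e : rel N) (bag : N -> {set V}) : Prop :=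
  [/\ is_tree e,
      (forall a, a \in A -> exists t, a \subset bag t) &
      (forall v t1 t2, v \in bag t1 -> v \in bag t2 ->
         connect (fun a b => [&& e a b, v \in bag a & v \in bag b]) t1 t2)].

Definition fec_number (R : realType) (V : finType) (A : seq {set V})
    (B : {set V}) : R :=
  inf (fun s : R => exists u : 'I_(size A) -> R,
        [/\ (forall j, 0 <= u j),
            (forall x, (exists j : 'I_(size A), x \in nth finset.set0 A j :&: B) ->
               1 <= \sum_(j < size A | x \in nth finset.set0 A j :&: B) u j) &
            s = \sum_(j < size A) u j]).

Definition td_width (R : realType) (V : finType) (A : seq {set V})
    (N : finType) (bag : N -> {set V}) : R :=
  \big[Num.max/0]_(t : N) fec_number R A (bag t).

Definition fhw (R : realType) (V : finType) (A : seq {set V}) : R :=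
  inf (fun r : R => exists (N : finType) (e : rel N) (bag : N -> {set V}),
        is_tree_decomposition A e bag /\ r = td_width R A bag).

Definition loomis_whitney (k : nat) : seq {set 'I_k} :=
  [seq [set j | j != i] | i <- enum 'I_k].

(* Component sigma of the multivariate extension of a query with atom list A
   (k = size A atoms) over fresh variables Z_1..Z_k (encoded as inr j, j<k):
   the i-th atom (0-indexed) is hat R_{sigma i}(Z_1..Z_{i+1}, X_{sigma i}). *)
Definition mv_component (V : finType) (A : seq {set V}) (s : 'S_(size A))
    : seq {set (V + 'I_(size A))} :=
  [seq [set inr j | j : 'I_(size A) & (j <= i)%N] :|: inl @: nth finset.set0 A (s i)
     | i : 'I_(size A) <- enum 'I_(size A)].

(* Fractional hypertree width of the multivariate extension (a union of
   queries): maximum over its components. *)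
Definition fhw_mv_extension (R : realType) (V : finType) (A : seq {set V}) : R :=
  \big[Num.max/0]_(s : 'S_(size A)) fhw R (@mv_component _ A s).

(* Main.v *)
Require Import Defs.
From mathcomp Require Import all_boot all_order all_algebra.
From mathcomp Require Import perm.
From mathcomp Require Import boolp classical_sets reals.
From mathcomp Require Import zify ring lra.
Import Order.TTheory GRing.Theory Num.Theory.
Set Implicit Arguments. Unset Strict Implicit. Unset Printing Implicit Defensive.

Section Tree.
Variable N : finType.
Variable e : rel N.
Hypothesis esym : symmetric e.
Hypothesis eirr : irreflexive e.

Definition rin (S : {set N}) : rel N := fun a b => [&& e a b, a \in S & b \in S].
Definition conn_in (S : {set N}) := forall a b, a \in S -> b \in S -> connect (rin S) a b.
Definition edges (U : {set N}) := [set p : N * N | [&& e p.1 p.2, p.1 \in U & p.2 \in U]].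
Definition treeU (U : {set N}) := [/\ (0 < #|U|)%N, conn_in U & #|edges U| = (2 * (#|U| - 1))%N].

Lemma leaf_conn (U S : {set N}) l m (Hleaf : forall y, y \in U -> e l y -> y = m)
  (SU : S \subset U) x y :
  x != l -> connect (rin S) x y ->
  connect (rin (S :\ l)) x (if y == l then m else y).
Proof.
move=> xl /connectP [p pth ->].
pose f y := if y == l then m else y.
have H : forall p y0, path (rin S) y0 p -> connect (rin (S :\ l)) x (f y0) ->
   connect (rin (S :\ l)) x (f (last y0 p)).
  elim=> [|z q IH] y0 /=; first by move=> _.
  move=> /andP [r pth'] c; apply: (IH z pth').
  move: r; rewrite /rin => /and3P [ey0z y0S zS].
  case: (eqVneq y0 l) c => [y0l | y0l] c; first subst y0.
    case: (eqVneq z l) => [zl|zl]; first by move: ey0z; rewrite zl eirr.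
    by rewrite /f (negbTE zl); have := Hleaf z (fintype.subsetP SU z zS) ey0z => ->; rewrite /f eqxx in c.
  case: (eqVneq z l) => [zl|zl].
    subst z. have ey : e l y0 by rewrite esym.
    by rewrite /f eqxx; have := Hleaf y0 (fintype.subsetP SU y0 y0S) ey => <-; rewrite /f (negbTE y0l) in c.
  rewrite /f (negbTE zl); rewrite /f (negbTE y0l) in c.
  apply: connect_trans c (connect1 _).
  by rewrite /rin ey0z !inE y0l zl y0S zS.
apply: (H p x pth); by rewrite /f (negbTE xl).
Qed.

Lemma first_step (U S : {set N}) l m (Hleaf : forall y, y \in U -> e l y -> y = m)
  (SU : S \subset U) a : connect (rin S) l a -> a != l -> m \in S.
Proof.
move=> /connectP [[|z p] /=]; first by move=> _ ->; rewrite eqxx.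
move=> /andP [/and3P [elz lS zS] _] _ _.
by rewrite -(Hleaf z (fintype.subsetP SU z zS) elz).
Qed.

Definition deg (U : {set N}) x := #|[set y in U | e x y]|.

Lemma edges_sum U : #|edges U| = (\sum_(x in U) deg U x)%N.
Proof.
rewrite -sum1_card /deg.
rewrite (eq_bigr (fun x => \sum_(y in [set y in U | e x y]) 1)%N); last by move=> x _; rewrite sum1_card.
rewrite pair_big_dep /=.
apply: eq_bigl => -[a b] /=; rewrite !inE /=.
by case: (a \in U); case: (b \in U); case: (e a b).
Qed.

Lemma leaf_exists U : treeU U -> (1 < #|U|)%N ->
  exists l m, [/\ l \in U, m \in U, e l m & forall y, y \in U -> e l y -> y = m].
Proof.
case=> U0 Uc UE U1.
have [x [xU dx]] : exists x, x \in U /\ (deg U x < 2)%N.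
  case/boolP: [exists x in U, deg U x < 2]%N => [/exists_inP [x ? ?]|]; first by exists x.
  rewrite negb_exists_in => /forall_inP H.
  have : (\sum_(x in U) 2 <= \sum_(x in U) deg U x)%N.
    by apply: leq_sum => i /H; rewrite -leqNgt.
  rewrite -edges_sum UE sum_nat_const; lia.
have [y [yU yx]] : exists y, y \in U /\ y != x.
  move/card_gt1P: U1 => [a [b [aU bU ab]]].
  case: (eqVneq a x) => [ax|ax]; last by exists a.
  by exists b; split => //; rewrite -ax eq_sym.
have : (0 < deg U x)%N.
  have /connectP [[|z p] /=] := Uc x y xU yU; first by move=> _ yx'; rewrite yx' eqxx in yx.
  move=> /andP [/and3P [exz _ zU] _] _.
  by apply/card_gt0P; exists z; rewrite !inE zU exz.
move=> d0.
have /cards1P [m Hm] : deg U x == 1%N by lia.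
have mS : m \in [set y in U | e x y] by rewrite Hm set11.
move: mS; rewrite inE => /andP [mU exm].
exists x, m; split => // z zU exz.
have : z \in [set y in U | e x y] by rewrite inE zU exz.
by rewrite Hm inE => /eqP.
Qed.

Lemma edges_del (U : {set N}) l m (Hleaf : forall y, y \in U -> e l y -> y = m) :
  l \in U -> m \in U -> e l m ->
  #|edges U| = (#|edges (U :\ l)| + 2)%N.
Proof.
move=> lU mU elm.
have lm : l != m by apply: contraTneq elm => ->; rewrite eirr.
rewrite (cardsD1 (l, m)) (cardsD1 (m, l) (edges U :\ (l, m))).
have -> : edges U :\ (l, m) :\ (m, l) = edges (U :\ l).
  apply/setP => -[a b]; rewrite !inE /= !xpair_eqE.
  case: (eqVneq a l) => [->|al] /=.
    rewrite andbF; apply/negbTE/negP => /and5P [_ bm elb _ bU].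
    by rewrite (Hleaf b bU elb) eqxx in bm.
  case: (eqVneq b l) => [->|bl] /=; last by rewrite andbF.
  rewrite andbT !andbF; apply/negbTE/negP => /and4P [nam eal aU _].
  by rewrite esym in eal; move: nam; rewrite (Hleaf a aU eal) eqxx.
rewrite !inE /= !xpair_eqE elm lU mU (esym m l) elm /=.
have -> : (m == l) = false by rewrite eq_sym (negbTE lm).
lia.
Qed.

Lemma conn_del (U S : {set N}) l m (Hleaf : forall y, y \in U -> e l y -> y = m) :
  S \subset U -> conn_in S -> conn_in (S :\ l).
Proof.
move=> SU Sc a b; rewrite !inE => /andP [al aS] /andP [bl bS].
have := leaf_conn Hleaf SU al (Sc a b aS bS).
by rewrite (negbTE bl).
Qed.

Lemma treeU_del U l m : treeU U -> (1 < #|U|)%N ->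
  [/\ l \in U, m \in U, e l m & forall y, y \in U -> e l y -> y = m] ->
  treeU (U :\ l).
Proof.
case=> U0 Uc UE U1 [lU mU elm Hleaf].
have cU := cardsD1 l U; rewrite lU in cU.
split.
- lia.
- exact: (conn_del Hleaf (subxx U) Uc).
- have := edges_del Hleaf lU mU elm; lia.
Qed.

Lemma helly n : forall (U S1 S2 S3 : {set N}), #|U| = n.+1 -> treeU U ->
  S1 \subset U -> S2 \subset U -> S3 \subset U ->
  conn_in S1 -> conn_in S2 -> conn_in S3 ->
  (exists t, t \in S1 :&: S2) -> (exists t, t \in S2 :&: S3) ->
  (exists t, t \in S1 :&: S3) ->
  exists t, [&& t \in S1, t \in S2 & t \in S3].
Proof.
elim: n => [|n IH] U S1 S2 S3 cU tU s1 s2 s3 c1 c2 c3 [t12 h12] [t23 h23] [t13 h13].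
  move/eqP/cards1P: cU => [u Uu].
  have inU t (X : {set N}) : X \subset U -> t \in X -> t = u.
    by move=> /fintype.subsetP XU /XU; rewrite Uu inE => /eqP.
  move: h12 h23 h13; rewrite !inE => /andP [a1 a2] /andP [b2 b3] /andP [d1 d3].
  exists u; apply/and3P; split.
  - by rewrite -(inU _ _ s1 a1).
  - by rewrite -(inU _ _ s2 b2).
  - by rewrite -(inU _ _ s3 d3).
have U1 : (1 < #|U|)%N by rewrite cU.
have [l [m [lU mU elm Hleaf]]] := leaf_exists tU U1.
have lm : l != m by apply: contraTneq elm => ->; rewrite eirr.
case/boolP: [&& l \in S1, l \in S2 & l \in S3] => [H|nH]; first by exists l.
have pairL (Si Sj Sh : {set N}) : Si \subset U -> Sj \subset U -> conn_in Si -> conn_in Sj ->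
    (exists t, t \in Si :&: Sj) -> (exists t, t \in Si :&: Sh) -> (exists t, t \in Sj :&: Sh) ->
    ~~ [&& l \in Si, l \in Sj & l \in Sh] -> exists t, t \in (Si :\ l) :&: (Sj :\ l).
  move=> si sj ci cj [t hij] [t' hih] [t'' hjh] nl.
  case: (eqVneq t l) => [tl|tl]; last first.
    by exists t; move: hij; rewrite !inE tl => /andP [-> ->].
  subst t; move: hij; rewrite inE => /andP [li lj].
  have lh : l \notin Sh by move: nl; rewrite li lj.
  move: hih hjh; rewrite !inE => /andP [it' ht'] /andP [jt'' ht''].
  have t'l : t' != l by apply: contraNneq lh => <-.
  have t''l : t'' != l by apply: contraNneq lh => <-.
  have mi := first_step Hleaf si (ci _ _ li it') t'l.
  have mj := first_step Hleaf sj (cj _ _ lj jt'') t''l.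
  by exists m; rewrite !inE eq_sym lm mi mj.
have [x1 h1] := pairL S1 S2 S3 s1 s2 c1 c2 (ex_intro _ t12 h12) (ex_intro _ t13 h13) (ex_intro _ t23 h23) nH.
have [x2 h2] : exists t, t \in (S2 :\ l) :&: (S3 :\ l).
  apply: (pairL S2 S3 S1 s2 s3 c2 c3 (ex_intro _ t23 h23)).
  - by exists t12; move: h12; rewrite !inE andbC.
  - by exists t13; move: h13; rewrite !inE andbC.
  - by move: nH; case: (l \in S1); case: (l \in S2); case: (l \in S3).
have [x3 h3] : exists t, t \in (S1 :\ l) :&: (S3 :\ l).
  apply: (pairL S1 S3 S2 s1 s3 c1 c3 (ex_intro _ t13 h13) (ex_intro _ t12 h12)).
  - by exists t23; move: h23; rewrite !inE andbC.
  - by move: nH; case: (l \in S1); case: (l \in S2); case: (l \in S3).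
have tU' := treeU_del tU U1 (And4 lU mU elm Hleaf).
have cU' : #|U :\ l| = n.+1 by have := cardsD1 l U; rewrite lU cU add1n => -[->].
have [t ht] := IH (U :\ l) (S1 :\ l) (S2 :\ l) (S3 :\ l) cU' tU'
  (finset.setSD _ s1) (finset.setSD _ s2) (finset.setSD _ s3)
  (conn_del Hleaf s1 c1) (conn_del Hleaf s2 c2) (conn_del Hleaf s3 c3)
  (ex_intro _ x1 h1) (ex_intro _ x2 h2) (ex_intro _ x3 h3).
by exists t; move: ht; rewrite !inE => /and3P [/andP [_ ->] /andP [_ ->] /andP [_ ->]].
Qed.

End Tree.

Lemma td_helly (V : finType) (A : seq {set V}) (N : finType) (e : rel N)
  (bag : N -> {set V}) x y z a1 a2 a3 :
  is_tree_decomposition A e bag -> a1 \in A -> a2 \in A -> a3 \in A ->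
  x \in a1 -> y \in a1 -> y \in a2 -> z \in a2 -> x \in a3 -> z \in a3 ->
  exists t, [&& x \in bag t, y \in bag t & z \in bag t].
Proof.
case=> [[N0 esym eirr econn ecard] cov conn] A1 A2 A3 x1 y1 y2 z2 x3 z3.
pose S v := [set t | v \in bag t].
have cS v : conn_in e (S v).
  move=> a b; rewrite !inE => va vb.
  rewrite (@eq_connect _ _ (fun a b => [&& e a b, v \in bag a & v \in bag b])).
    exact: conn.
  by move=> c d; rewrite /rin !inE.
have tT : treeU e [set: N].
  split.
  - by rewrite cardsT.
  - move=> a b _ _; rewrite (@eq_connect _ _ e) //.
    by move=> c d; rewrite /rin !inE !andbT.
  - rewrite cardsT -ecard; apply: eq_card => p; rewrite !inE.
    by rewrite !andbT.
have sub v : S v \subset [set: N] by apply: finset.subsetT.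
have cN : #|[set: N]| = #|N|.-1.+1 by rewrite cardsT; lia.
have E1 : exists t, t \in S x :&: S y.
  have [t ht] := cov a1 A1; exists t; rewrite !inE.
  by rewrite (fintype.subsetP ht _ x1) (fintype.subsetP ht _ y1).
have E2 : exists t, t \in S y :&: S z.
  have [t ht] := cov a2 A2; exists t; rewrite !inE.
  by rewrite (fintype.subsetP ht _ y2) (fintype.subsetP ht _ z2).
have E3 : exists t, t \in S x :&: S z.
  have [t ht] := cov a3 A3; exists t; rewrite !inE.
  by rewrite (fintype.subsetP ht _ x3) (fintype.subsetP ht _ z3).
have [t ht] := @helly N e esym eirr #|N|.-1 [set: N] (S x) (S y) (S z)
  cN tT (sub x) (sub y) (sub z) (cS x) (cS y) (cS z) E1 E2 E3.
by exists t; move: ht; rewrite !inE.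
Qed.

Local Open Scope ring_scope.

Section Sums.
Variable R : realType.
Variable I : finType.

Lemma sum_sub (P Q : pred I) (u : I -> R) : (forall j, 0 <= u j) ->
  (forall j, P j -> Q j) -> \sum_(j | P j) u j <= \sum_(j | Q j) u j.
Proof.
move=> u0 PQ; rewrite [X in X <= _]big_mkcond [X in _ <= X]big_mkcond /=.
apply: ler_sum => j _; case: (boolP (P j)) => Pj; first by rewrite (PQ j Pj).
by case: (Q j).
Qed.

Lemma sum_two (a b : I) (u : I -> R) : a != b ->
  \sum_(j | (j == a) || (j == b)) u j = u a + u b.
Proof.
move=> ab; rewrite (bigD1 a) /= ?eqxx //; congr (_ + _).
rewrite (big_pred1 b) // => j; rewrite /=.
by case: (eqVneq j a) => [->|ja] /=; [rewrite (negbTE ab) | rewrite andbT].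
Qed.

Lemma sum_but (a : I) (u : I -> R) :
  \sum_(j | j != a) u j = \sum_j u j - u a.
Proof. by rewrite [X in _ = X - _](bigD1 a) //= addrC addrK. Qed.

Lemma sum_ge_two (P : pred I) (a b : I) (u : I -> R) : (forall j, 0 <= u j) ->
  a != b -> P a -> P b -> u a + u b <= \sum_(j | P j) u j.
Proof.
move=> u0 ab Pa Pb; rewrite -sum_two //; apply: sum_sub => // j.
by case/orP => /eqP ->.
Qed.

Lemma sum_ge_one (P : pred I) (a : I) (u : I -> R) : (forall j, 0 <= u j) ->
  P a -> u a <= \sum_(j | P j) u j.
Proof.
move=> u0 Pa; apply: le_trans (_ : \sum_(j | j == a) u j <= _).
  by rewrite big_pred1_eq.
by apply: sum_sub => // j /eqP ->.
Qed.
End Sums.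

Lemma fec_le_sum (R : realType) (W : finType) (Q : seq {set W}) (B : {set W})
  (u : 'I_(size Q) -> R) : (forall j, 0 <= u j) ->
  (forall x, (exists j : 'I_(size Q), x \in nth finset.set0 Q j :&: B) ->
     1 <= \sum_(j < size Q | x \in nth finset.set0 Q j :&: B) u j) ->
  fec_number R Q B <= \sum_(j < size Q) u j.
Proof.
move=> u0 cov; apply: ge_inf; last by exists u.
exists 0 => r [v [v0 _ ->]]; exact: sumr_ge0.
Qed.

Lemma fec_ne (R : realType) (W : finType) (Q : seq {set W}) (B : {set W}) :
  ((fun s : R => exists u : 'I_(size Q) -> R,
        [/\ (forall j, 0 <= u j),
            (forall x, (exists j : 'I_(size Q), x \in nth finset.set0 Q j :&: B) ->
               1 <= \sum_(j < size Q | x \in nth finset.set0 Q j :&: B) u j) &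
            s = \sum_(j < size Q) u j]) !=set0)%classic.
Proof.
exists (\sum_(j < size Q) 1), (fun _ => 1); split => // x [j hj].
by apply: (@sum_ge_one R _ _ j (fun _ => 1)).
Qed.

Section Main.
Variable R : realType.
Variable V : finType.
Variable A : seq {set V}.
Variable X : 'I_(size A) -> V.
Hypothesis HA : forall j : 'I_(size A), nth finset.set0 A j = [set y | y != X j].
Hypothesis HX : injective X.
Hypothesis HK : (3 <= size A)%N.
Variable s : 'S_(size A).

Local Notation K := (size A).
Definition Cmv (i : 'I_K) : {set V + 'I_K} :=
  [set inr j | j : 'I_K & (j <= i)%N] :|: inl @: nth finset.set0 A (s i).
Local Notation Amv := (@mv_component _ A s).

Lemma Amv_eq : Amv = [seq Cmv i | i <- enum 'I_K].
Proof. by []. Qed.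

Lemma size_mv : size Amv = K.
Proof. by rewrite Amv_eq size_map size_enum_ord. Qed.

Lemma nth_mv_nat n (hn : (n < K)%N) : nth finset.set0 Amv n = Cmv (Ordinal hn).
Proof.
rewrite Amv_eq (nth_map (Ordinal hn)); last by rewrite size_enum_ord.
by congr Cmv; apply: val_inj; rewrite /= nth_enum_ord.
Qed.

Lemma nth_mv (j : 'I_(size Amv)) : nth finset.set0 Amv j = Cmv (cast_ord size_mv j).
Proof.
have hj : (j < K)%N by case: j => j /=; rewrite size_mv.
by rewrite (nth_mv_nat hj); congr Cmv; apply: val_inj.
Qed.

Lemma memC_inr (i z : 'I_K) : (inr z \in Cmv i) = (z <= i)%N.
Proof.
rewrite /Cmv inE mem_imset; last by move=> a b [].
rewrite inE; case: (z <= i)%N => //=.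
by apply/negbTE/imsetP => -[x _].
Qed.

Lemma memC_inl (i : 'I_K) (x : V) : (inl x \in Cmv i) = (x != X (s i)).
Proof.
rewrite /Cmv inE mem_imset; last by move=> a b [].
rewrite HA inE orbC; case: (x != X (s i)) => //=.
by apply/negbTE/imsetP => -[y _].
Qed.

Lemma mem_inr (j : 'I_(size Amv)) (z : 'I_K) :
  (inr z \in nth finset.set0 Amv j) = (z <= j)%N.
Proof. by rewrite nth_mv memC_inr. Qed.

Lemma mem_inl (j : 'I_(size Amv)) (x : V) :
  (inl x \in nth finset.set0 Amv j) = (x != X (s (cast_ord size_mv j))).
Proof. by rewrite nth_mv memC_inl. Qed.

Lemma XsE (i i' : 'I_K) : (X (s i) == X (s i')) = (i == i').
Proof. by rewrite (inj_eq HX) (inj_eq (@perm_inj _ s)). Qed.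

Lemma lt0 : (0 < K)%N. Proof. lia. Qed.
Lemma lt1 : (K - 2 < K)%N. Proof. lia. Qed.
Lemma lt2 : (K - 1 < K)%N. Proof. lia. Qed.
Definition i0 : 'I_K := Ordinal lt0.
Definition i1 : 'I_K := Ordinal lt1.
Definition i2 : 'I_K := Ordinal lt2.

Lemma fec_ge (B : {set V + 'I_K}) :
  inr i1 \in B -> inl (X (s i1)) \in B -> inl (X (s i2)) \in B ->
  3%:R / 2%:R <= fec_number R Amv B.
Proof.
move=> zB aB bB; apply: lb_le_inf; first exact: fec_ne.
move=> r [u [u0 cov ->]].
pose j1 : 'I_(size Amv) := cast_ord (esym size_mv) i1.
pose j2 : 'I_(size Amv) := cast_ord (esym size_mv) i2.
have j12 : j1 != j2 by apply/eqP => /(congr1 val) /=; lia.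
have c1 : 1 <= u j1 + u j2.
  apply: le_trans (cov (inr i1) _) _.
    by exists j2; rewrite inE zB andbT mem_inr /=; lia.
  rewrite -sum_two //; apply: sum_sub => // j; rewrite inE mem_inr => /andP [h _].
  have jK : (j < K)%N by case: j h => j hj _ /=; move: hj; rewrite size_mv.
  apply/orP; rewrite -!(inj_eq val_inj) /=.
  by move: h; rewrite /i1 /=; lia.
have c2 : 1 <= \sum_j u j - u j1.
  apply: le_trans (cov (inl (X (s i1))) _) _.
    exists j2; rewrite inE aB andbT mem_inl eq_sym XsE.
    by apply/eqP => /(congr1 val) /=; lia.
  rewrite -sum_but; apply: sum_sub => // j; rewrite inE mem_inl => /andP [h _].
  apply: contra h => /eqP ->; rewrite eq_sym XsE; apply/eqP; apply: val_inj => //.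
have c3 : 1 <= \sum_j u j - u j2.
  apply: le_trans (cov (inl (X (s i2))) _) _.
    exists j1; rewrite inE bB andbT mem_inl eq_sym XsE.
    by apply/eqP => /(congr1 val) /=; lia.
  rewrite -sum_but; apply: sum_sub => // j; rewrite inE mem_inl => /andP [h _].
  apply: contra h => /eqP ->; rewrite eq_sym XsE; apply/eqP; apply: val_inj => //.
lra.
Qed.

Definition bagT : {set V + 'I_K} := [set v | v != inr i2].
Definition bagF : {set V + 'I_K} := [set v | v != inl (X (s i2))].
Definition bagD (b : bool) := if b then bagT else bagF.

Lemma i2_neq (i : 'I_K) : i != i2 -> (i < K - 1)%N.
Proof. move=> h; have := ltn_ord i; have : val i != val i2 by []; rewrite /=; lia. Qed.

Lemma td : is_tree_decomposition Amv (fun a b : bool => a != b) bagD.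
Proof.
split.
- split.
  + by rewrite card_bool.
  + by move=> a b; rewrite eq_sym.
  + by move=> a; rewrite eqxx.
  + by move=> [] []; rewrite ?connect0 // connect1.
  + rewrite card_bool; have -> : [set p : bool * bool | p.1 != p.2] = [set (true, false); (false, true)] by apply/setP => -[[] []]; rewrite !inE.
    by rewrite cards2.
- move=> a; rewrite Amv_eq => /mapP [i _ ->].
  case: (eqVneq i i2) => [->|ii2].
    exists false; apply/fintype.subsetP => -[x|z] h; rewrite /bagD /bagF inE //.
    by move: h; rewrite memC_inl; apply: contra => /eqP [->].
  exists true; apply/fintype.subsetP => -[x|z] h; rewrite /bagD /bagT inE //.
  move: h; rewrite memC_inr => h; apply/eqP => -[zi2]; move: h; rewrite zi2 /=.
  have := i2_neq ii2; lia.
- move=> v t1 t2 h1 h2; case: (eqVneq t1 t2) => [->|t12]; first exact: connect0.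
  by apply: connect1; rewrite t12 h1 h2.
Qed.

Definition jj (i : 'I_K) : 'I_(size Amv) := cast_ord (esym size_mv) i.
Lemma jjK i : cast_ord size_mv (jj i) = i.
Proof. exact: val_inj. Qed.

Lemma fecF : fec_number R Amv bagF <= 3%:R / 2%:R.
Proof.
pose u (j : 'I_(size Amv)) : R := if j == jj i2 then 1 else 0.
apply: le_trans (fec_le_sum (u := u) _ _) _.
- by move=> j; rewrite /u; case: ifP.
- move=> v [j hj].
  have u0 : forall j, 0 <= u j by move=> j'; rewrite /u; case: ifP.
  have hP : v \in nth finset.set0 Amv (jj i2) :&: bagF.
    move: hj; rewrite !finset.in_setI => /andP [_ hB]; rewrite hB andbT.
    case: v hB => [x|z] h.
    * by rewrite mem_inl jjK; move: h; rewrite /bagF inE; apply: contra => /eqP ->.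
    * rewrite mem_inr /=; have := ltn_ord z; lia.
  by apply: le_trans (sum_ge_one u0 hP); rewrite /u eqxx.
- rewrite -big_mkcond /= big_pred1_eq; lra.
Qed.

Lemma fecT : fec_number R Amv bagT <= 3%:R / 2%:R.
Proof.
have d01 : jj i0 != jj i1 by apply/eqP => /(congr1 val) /=; lia.
have d02 : jj i0 != jj i2 by apply/eqP => /(congr1 val) /=; lia.
have d12 : jj i1 != jj i2 by apply/eqP => /(congr1 val) /=; lia.
pose P (j : 'I_(size Amv)) := [|| j == jj i0, j == jj i1 | j == jj i2].
pose u (j : 'I_(size Amv)) : R := if P j then 1 / 2%:R else 0.
have u0 : forall j, 0 <= u j by move=> j; rewrite /u; case: ifP => // _; lra.
have uP j : P j -> u j = 1 / 2%:R by rewrite /u => ->.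
have P0 : P (jj i0) by rewrite /P eqxx.
have P1 : P (jj i1) by rewrite /P eqxx orbT.
have P2 : P (jj i2) by rewrite /P eqxx !orbT.
apply: le_trans (fec_le_sum (u := u) u0 _) _.
- move=> v [j hj].
  have hv : v \in bagT by move: hj; rewrite finset.in_setI => /andP [].
  have pair a b : a != b -> P a -> P b -> v \in nth finset.set0 Amv a -> v \in nth finset.set0 Amv b ->
      1 <= \sum_(j < size Amv | v \in nth finset.set0 Amv j :&: bagT) u j.
    move=> ab Pa Pb va vb; apply: le_trans (sum_ge_two u0 ab _ _).
    + by rewrite (uP _ Pa) (uP _ Pb); lra.
    + by rewrite finset.in_setI va hv.
    + by rewrite finset.in_setI vb hv.
  clear hj; case: v hv pair => [x|z] hv pair.
  + case: (eqVneq x (X (s i0))) => [x0|x0].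
      apply: (pair _ _ d12 P1 P2); rewrite mem_inl jjK x0 XsE;
        apply/eqP => /(congr1 val) /=; lia.
    case: (eqVneq x (X (s i1))) => [x1|x1].
      apply: (pair _ _ d02 P0 P2); rewrite mem_inl jjK ?x0 // x1 XsE;
        apply/eqP => /(congr1 val) /=; lia.
    by apply: (pair _ _ d01 P0 P1); rewrite mem_inl jjK.
  + have zK : (z < K - 1)%N.
      have := ltn_ord z; move: hv; rewrite /bagT inE => hz.
      have : val z != val i2 by apply: contra hz => /eqP /val_inj ->.
      rewrite /=; lia.
    by apply: (pair _ _ d12 P1 P2); rewrite mem_inr /=; lia.
- rewrite -big_mkcond /= (bigD1 (jj i0)) //=.
  rewrite (eq_bigl (fun j => (j == jj i1) || (j == jj i2))).
    by rewrite sum_two //; lra.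
  move=> j; rewrite /P; case: (eqVneq j (jj i0)) => [->|] /=; last by rewrite andbT.
  by rewrite (negbTE d01) (negbTE d02).
Qed.

Lemma lb_all (N : finType) (e : rel N) (bag : N -> {set V + 'I_K}) :
  is_tree_decomposition Amv e bag -> 3%:R / 2%:R <= td_width R Amv bag.
Proof.
move=> htd.
have mC i : Cmv i \in Amv by rewrite Amv_eq; apply: map_f; rewrite mem_enum.
have n01 : i0 != i1 by apply/eqP => /(congr1 val) /=; lia.
have n02 : i0 != i2 by apply/eqP => /(congr1 val) /=; lia.
have n12 : i1 != i2 by apply/eqP => /(congr1 val) /=; lia.
have a1 : inl (X (s i1)) \in Cmv i2 by rewrite memC_inl XsE.
have a2 : inr i1 \in Cmv i2 by rewrite memC_inr /=; lia.
have a3 : inr i1 \in Cmv i1 by rewrite memC_inr.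
have a4 : inl (X (s i2)) \in Cmv i1 by rewrite memC_inl XsE eq_sym n12.
have a5 : inl (X (s i1)) \in Cmv i0 by rewrite memC_inl XsE eq_sym n01.
have a6 : inl (X (s i2)) \in Cmv i0 by rewrite memC_inl XsE eq_sym n02.
have [t /and3P [h1 h2 h3]] := td_helly htd (mC i2) (mC i1) (mC i0) a1 a2 a3 a4 a5 a6.
apply: le_trans (fec_ge h2 h1 h3) _.
exact: (le_bigmax 0 (fun t => fec_number R Amv (bag t)) t).
Qed.

Lemma fhw_mv : fhw R Amv = 3%:R / 2%:R.
Proof.
have W : td_width R Amv bagD <= 3%:R / 2%:R.
  apply: bigmax_le; first lra.
  by case=> _; [exact: fecT | exact: fecF].
have ne : (fun r : R => exists (N : finType) (e : rel N) (bag : N -> {set V + 'I_K}),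
        is_tree_decomposition Amv e bag /\ r = td_width R Amv bag) (td_width R Amv bagD).
  by exists (bool : finType), (fun a b : bool => a != b), bagD; split => //; exact: td.
apply/le_anti/andP; split.
- apply: le_trans W; apply: ge_inf ne.
  by exists (3%:R / 2%:R) => r [N [e [bag [htd ->]]]]; exact: lb_all htd.
- apply: lb_le_inf; first by exists (td_width R Amv bagD).
  by move=> r [N [e [bag [htd ->]]]]; exact: lb_all htd.
Qed.
End Main.

Lemma size_lw k : size (loomis_whitney k) = k.
Proof. by rewrite size_map size_enum_ord. Qed.

Theorem mainTheorem9 (R : realType) (k : nat) (hk : (3 <= k)%N) :
  fhw_mv_extension R (loomis_whitney k) = 3%:R / 2%:R.
Proof.
case: k hk => [|[|[|n]]] // hk.
set A := loomis_whitney n.+3.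
pose X (j : 'I_(size A)) : 'I_n.+3 := inord (val j).
have jlt (j : 'I_(size A)) : (j < n.+3)%N by case: j => j /=; rewrite size_lw.
have HA : forall j : 'I_(size A), nth finset.set0 A j = [set y | y != X j].
  move=> j; rewrite /A /loomis_whitney (nth_map ord0); last by rewrite size_enum_ord.
  congr finset.finset; apply: funext => y; congr (_ != _ ); apply: val_inj.
  by rewrite /X /= inordK // nth_enum_ord.
have HX : injective X.
  by move=> a b /(congr1 val); rewrite /X /= !inordK // => /val_inj.
have HK : (3 <= size A)%N by rewrite size_lw.
have E : forall s, fhw R (@mv_component _ A s) = 3%:R / 2%:R.
  by move=> s; have := @fhw_mv R _ A X HA HX HK s.
rewrite /fhw_mv_extension (eq_bigr (fun _ => 3%:R / 2%:R)); last by move=> s _; exact: E.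
apply/le_anti/andP; split.
- apply: bigmax_le => //; have : (0 : R) <= 3%:R / 2%:R by lra.
  by [].
- exact: (le_bigmax (0 : R) (fun _ : 'S_(size A) => 3%:R / 2%:R : R) 1%g).
Qed.
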